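(* Let $L>0$, $g\in L^2(0,L;\mathbb{C})$, $\lambda_0=\int_0^L\overline{g(x)}dx$, $\lambda_k=\frac{2ik\pi}{L}$ for $k\in\mathbb{Z}\setminus\{0\}$, and assume $\lambda_0\ne\lambda_k$ for all $k\ne0$. Let $\tilde A^*$ be the operator on $L^2(0,L)$ with domain $D(\tilde A^* )=\{z\in H^1(0,L):z(L)=z(0)\}$, $\tilde A^*z(x)=-z'(x)+\int_0^L\overline{g(y)}z(y)dy$, and $\tilde B^*:D(\tilde A^* )\to\mathbb{C}$, $\tilde B^*z=z(L)$. Then $\ker(\lambda-\tilde A^* )\cap\ker\tilde B^*=\{0\}$ for every $\lambda\in\mathbb{C}$ if and only if $$1+\frac{1}{\lambda_k-\lambda_0}\int_0^L\overline{g(x)}e^{-\lambda_kx}dx\ne0\quad\text{for all }k\in\mathbb{Z}\setminus\{0\}.$$ *)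

(* Defs.v *)
From HB Require Import structures.
From mathcomp Require Import all_boot all_order all_algebra.
From mathcomp Require Import all_classical all_reals all_analysis.
From mathcomp Require Import complex.
Set Implicit Arguments. Unset Strict Implicit. Unset Printing Implicit Defensive.
Import Order.TTheory GRing.Theory Num.Theory.
Import numFieldNormedType.Exports.
Local Open Scope classical_set_scope.
Local Open Scope ring_scope.

Section Defs.
Variable R : realType.
Local Notation mu := (@lebesgue_measure R).

Definition ReF (f : R -> R[i]) : R -> R := fun x => complex.Re (f x).
Definition ImF (f : R -> R[i]) : R -> R := fun x => complex.Im (f x).

Definition cint (a b : R) (f : R -> R[i]) : R[i] :=
  Complex (\int[mu]_(x in `[a, b]) ReF f x) (\int[mu]_(x in `[a, b]) ImF f x).

Definition L2 (L : R) (f : R -> R[i]) : Prop :=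
  [/\ measurable_fun `[0, L] (ReF f), measurable_fun `[0, L] (ImF f) &
      mu.-integrable `[0, L]
        (fun x => ((ReF f x) ^+ 2 + (ImF f x) ^+ 2)%:E)].

(* w is a (weak) derivative of z in L^2 on [0,L], i.e. z is (the continuous
   representative of) an H^1(0,L) function with z' = w:
   z(x) = z(0) + \int_0^x w  for all x in [0,L]. *)
Definition H1_deriv (L : R) (z w : R -> R[i]) : Prop :=
  L2 L w /\ forall x, 0 <= x <= L -> z x = z 0 + cint 0 x w.

Definition H1 (L : R) (z : R -> R[i]) : Prop := exists w, H1_deriv L z w.

Definition in_dom_Astar (L : R) (z : R -> R[i]) : Prop := H1 L z /\ z L = z 0.

Definition in_ker_lam_Astar (L : R) (g : R -> R[i]) (lam : R[i])
    (z : R -> R[i]) : Prop :=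
  in_dom_Astar L z /\
  exists w, H1_deriv L z w /\
    {ae mu, forall x, 0 <= x <= L ->
       lam * z x - (- w x + cint 0 L (fun y => (g y)^*%C * z y)) = 0}.

Definition Bstar (z : R -> R[i]) (L : R) : R[i] := z L.

Definition expi (t : R) : R[i] := Complex (cos t) (sin t).

Definition lamk (L : R) (k : int) : R[i] := Complex 0 (2 * k%:~R * pi / L).

Definition lam0 (L : R) (g : R -> R[i]) : R[i] := cint 0 L (fun x => (g x)^*%C).

End Defs.

(* Main.v *)
Require Import Defs.
From HB Require Import structures.
From mathcomp Require Import all_boot all_order all_algebra.
From mathcomp Require Import all_classical all_reals all_analysis.
From mathcomp Require Import complex.
From mathcomp Require Import ring lra.
From mathcomp Require Import measurable_realfun.
Set Implicit Arguments. Unset Strict Implicit. Unset Printing Implicit Defensive.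
Import Order.TTheory GRing.Theory Num.Theory.
Import numFieldNormedType.Exports.
Local Open Scope classical_set_scope.
Local Open Scope ring_scope.
Section S.
Variable R : realType.
Local Notation mu := (@lebesgue_measure R).


Lemma cplx_eq (x y : R[i]) : complex.Re x = complex.Re y -> complex.Im x = complex.Im y -> x = y.
Proof. by case: x => a b; case: y => c d /= -> ->. Qed.

Lemma abs_le_1sqr (x y : R) : `|x| <= 1 + (x ^+ 2 + y ^+ 2).
Proof.
have hy : 0 <= y ^+ 2 by rewrite sqr_ge0.
have hx : x ^+ 2 = `|x| ^+ 2 by rewrite real_normK ?num_real.
rewrite hx; have := normr_ge0 x; move: (`|x|) => z z0; nra.
Qed.

Lemma int_within (a b : R) (f : R -> R) :
  {within `[a, b], continuous f} -> mu.-integrable `[a, b] (EFin \o f).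
Proof. by move=> cf; apply: continuous_compact_integrable => //; exact: segment_compact. Qed.

Lemma int_cont (a b : R) (f : R -> R) :
  continuous f -> mu.-integrable `[a, b] (EFin \o f).
Proof. by move=> cf; apply: int_within; exact: continuous_subspaceT. Qed.

Lemma L2_int (L : R) (f : R -> R[i]) : L2 L f ->
  mu.-integrable `[0, L] (EFin \o ReF f) /\ mu.-integrable `[0, L] (EFin \o ImF f).
Proof.
case=> m1 m2 i.
have iD : mu.-integrable `[0, L]
    (EFin \o (fun x => 1 + (ReF f x ^+ 2 + ImF f x ^+ 2))).
  have -> : (EFin \o (fun x => 1 + (ReF f x ^+ 2 + ImF f x ^+ 2))) =
     (EFin \o cst 1) \+ (fun x => (ReF f x ^+ 2 + ImF f x ^+ 2)%:E).
    by apply/funext => x /=; rewrite EFinD.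
  apply: integrableD => //; apply: int_cont; exact: cst_continuous.
split; apply: le_integrable iD => //.
- exact/measurable_EFinP.
- move=> x _ /=; rewrite lee_fin.
  rewrite [X in _ <= X]ger0_norm ?addr_ge0 ?sqr_ge0 //.
  exact: abs_le_1sqr.
- exact/measurable_EFinP.
- move=> x _ /=; rewrite lee_fin.
  rewrite [X in _ <= X]ger0_norm ?addr_ge0 ?sqr_ge0 // addrC.
  rewrite [ReF f x ^+ 2 + _]addrC addrC; exact: abs_le_1sqr.
Qed.

Definition iab (a b : R) (f : R -> R) := mu.-integrable `[a, b] (EFin \o f).

Lemma iabZ a b k f : iab a b f -> iab a b (fun x => k * f x).
Proof.
move=> h; rewrite /iab.
have -> : EFin \o (fun x => k * f x) = (fun x => (k%:E * (EFin \o f) x)%E) by apply/funext => x /=; rewrite EFinM.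
exact: integrableZl.
Qed.

Lemma iabD a b f g : iab a b f -> iab a b g -> iab a b (fun x => f x + g x).
Proof.
move=> h1 h2; rewrite /iab.
have -> : EFin \o (fun x => f x + g x) = ((EFin \o f) \+ (EFin \o g))%E by apply/funext => x /=; rewrite EFinD.
exact: integrableD.
Qed.

Lemma iabN a b f : iab a b f -> iab a b (fun x => - f x).
Proof.
move=> h; rewrite /iab.
have -> : EFin \o (fun x => - f x) = (-%E \o (EFin \o f)) by apply/funext => x /=; rewrite EFinN.
exact: integrableN.
Qed.

Lemma iabB a b f g : iab a b f -> iab a b g -> iab a b (fun x => f x - g x).
Proof. by move=> h1 h2; exact: (iabD h1 (iabN h2)). Qed.

Lemma iabS a b c d f : a <= c -> d <= b -> iab a b f -> iab c d f.
Proof.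
move=> ac db; apply: integrableS => //.
by apply: subset_itv; rewrite bnd_simp.
Qed.

Lemma Rint_ext (a b : R) (f g : R -> R) : (forall x, a <= x <= b -> f x = g x) ->
  \int[mu]_(x in `[a, b]) f x = \int[mu]_(x in `[a, b]) g x.
Proof. by move=> fg; apply: eq_Rintegral => x; rewrite inE /= in_itv /= => /fg. Qed.

Lemma cint_ext (a b : R) (f g : R -> R[i]) : (forall x, a <= x <= b -> f x = g x) -> cint a b f = cint a b g.
Proof. by move=> fg; rewrite /cint; congr Complex; apply: Rint_ext => x /fg; rewrite /ReF /ImF => ->. Qed.

Lemma cintZ (a b : R) (d : R[i]) (f : R -> R[i]) : iab a b (ReF f) -> iab a b (ImF f) ->
  cint a b (fun x => d * f x) = d * cint a b f.
Proof.
move=> h1 h2; rewrite /cint; case: d => d1 d2.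
have e1 : \int[mu]_(x in `[a, b]) ReF (fun x => (Complex d1 d2) * f x) x =
   \int[mu]_(x in `[a, b]) (d1 * ReF f x - d2 * ImF f x).
  by apply: Rint_ext => x _; rewrite /ReF /ImF; case: (f x).
have e2 : \int[mu]_(x in `[a, b]) ImF (fun x => (Complex d1 d2) * f x) x =
   \int[mu]_(x in `[a, b]) (d1 * ImF f x + d2 * ReF f x).
  by apply: Rint_ext => x _; rewrite /ReF /ImF; case: (f x) => u v /=; ring.
rewrite e1 e2 RintegralB ?RintegralD ?RintegralZl //; try exact: iabZ.

Qed.

Lemma cintB (a b : R) (f g : R -> R[i]) : iab a b (ReF f) -> iab a b (ImF f) ->
  iab a b (ReF g) -> iab a b (ImF g) ->
  cint a b (fun x => f x - g x) = cint a b f - cint a b g.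
Proof.
move=> h1 h2 h3 h4; rewrite /cint.
have e1 : \int[mu]_(x in `[a, b]) ReF (fun x => f x - g x) x =
   \int[mu]_(x in `[a, b]) (ReF f x - ReF g x).
  by apply: Rint_ext => x _; rewrite /ReF; case: (f x); case: (g x).
have e2 : \int[mu]_(x in `[a, b]) ImF (fun x => f x - g x) x =
   \int[mu]_(x in `[a, b]) (ImF f x - ImF g x).
  by apply: Rint_ext => x _; rewrite /ImF; case: (f x); case: (g x).
by rewrite e1 e2 !RintegralB.
Qed.


Lemma periodic_int (f : R -> R) (x : R) (n : int) :
  (forall u, f (u + pi *+ 2) = f u) -> f (x + 2 * n%:~R * pi) = f x.
Proof.
move=> hf.
have hn : forall (m : nat) a, f (a + 2 * m%:R * pi) = f a.
  move=> m a; have := @periodicn _ _ f (pi *+ 2) hf m a.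
  have -> : pi *+ 2 *+ m = 2 * m%:R * pi :> R.
    by rewrite -mulr_natr -mulr_natr; ring.
  by [].
case: n => m; first exact: hn.
rewrite NegzE mulrNz mulrN mulNr.
have e : (Posz m.+1)%:~R = m.+1%:R :> R by [].
by rewrite e -[in RHS](subrK (2 * m.+1%:R * pi) x) hn.
Qed.

Lemma cos_per (x : R) (n : int) : cos (x + 2 * n%:~R * pi) = cos x.
Proof. by apply: periodic_int; exact: cosD2pi. Qed.
Lemma sin_per (x : R) (n : int) : sin (x + 2 * n%:~R * pi) = sin x.
Proof. by apply: periodic_int; exact: sinD2pi. Qed.

Lemma cos_eq1 (t : R) : cos t = 1 -> exists n : int, t = 2 * n%:~R * pi.
Proof.
move=> ct.
have p2 : 0 < 2 * pi :> R by rewrite mulr_gt0 ?pi_gt0.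
pose u := t / (2 * pi).
pose n := Num.floor u.
pose r := t - 2 * n%:~R * pi.
have cr : cos r = 1 by rewrite -ct /r -[in RHS](subrK (2 * n%:~R * pi) t) cos_per.
have h1 := Num.Theory.floor_le u.
have h2 := Num.Theory.floorD1_gt u; rewrite intrD in h2.
have rE : r = (u - n%:~R) * (2 * pi) by rewrite /r /u mulrBl divfK ?gt_eqF //; ring.
have r0 : 0 <= r by rewrite rE mulr_ge0 ?subr_ge0 // ltW.
have r2 : r < 2 * pi.
  by rewrite rE -[X in _ < X]mul1r ltr_pM2r // ltrBlDl.
exists n; apply/eqP; rewrite -subr_eq0 -/r; apply/eqP.
have [rpi|rpi] := lerP r pi.
  apply: (@cos_inj R r 0); rewrite ?in_itv /= ?r0 ?rpi ?lexx ?pi_ge0 //.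
  by rewrite cr cos0.
have e : 2 * pi - r = - r + 2 * (1:int)%:~R * pi by rewrite mulr1z mulr1 addrC.
have c2 : cos (2 * pi - r) = cos 0 by rewrite e cos_per cosN cr cos0.
have := @cos_inj R (2 * pi - r) 0.
rewrite !in_itv /= lexx pi_ge0 c2 subr_ge0 (ltW r2) lerBlDr -lerBlDl.
have -> : 2 * pi - pi = pi :> R by ring.
rewrite (ltW rpi) => /(_ isT isT erefl) /eqP.
by rewrite subr_eq0 => /eqP r2e; move: r2; rewrite r2e ltxx.
Qed.


Lemma is_derive_expk (k t : R) :
  is_derive t 1 (fun t => expR (k * t)) (expR (k * t) * k).
Proof.
have h : is_derive t 1 (( *%R k) : R -> R) k.
  by apply: is_derive_eq; exact: mulr1.
exact: (@is_derive1_comp _ expR ( *%R k) t _ _ _ h).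
Qed.

Lemma ode_uniq (a b L : R) (p q : R -> R) : 0 < L ->
  {within `[0,L], continuous p} -> {within `[0,L], continuous q} ->
  (forall x, 0 < x < L -> is_derive x 1 p (-(a * p x - b * q x))) ->
  (forall x, 0 < x < L -> is_derive x 1 q (-(a * q x + b * p x))) ->
  p 0 = 0 -> q 0 = 0 -> forall x, 0 <= x <= L -> p x = 0 /\ q x = 0.
Proof.
move=> L0 cp cq dp dq p0 q0 x /andP[x0 xL].
pose E t := expR (2 * a * t) * (p t ^+ 2 + q t ^+ 2).
have Ex : E x = E 0.
  move: x0; rewrite le_eqVlt => /predU1P[<-//|x0].
  have dE : forall t, t \in `]0, x[ -> is_derive t 1 E 0.
    move=> t; rewrite in_itv /= => /andP[t0 tx].
    have tI : 0 < t < L by rewrite t0 /= (lt_le_trans tx xL).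
    have hp := dp t tI; have hq := dq t tI.
    have H := is_deriveM (is_derive_expk (2 * a) t)
      (is_deriveD (is_deriveX 2 hp) (is_deriveX 2 hq)).
    apply: is_derive_eq H _.
    rewrite /= !expr1 /GRing.scale /=.
    have -> : (p ^+ 2 + q ^+ 2) t = p t ^+ 2 + q t ^+ 2 by [].
    ring.
  have cE : {within `[0, x], continuous E}.
    have sub : `[0, x] `<=` `[0, L].
      by apply: subset_itvl; rewrite bnd_simp.
    have ce : continuous (fun t : R => expR (2 * a * t)).
      move=> t; apply: continuous_comp; last exact: continuous_expR.
      by apply: continuousM; [exact: cvg_cst | exact: cvg_id].
    rewrite /E => t.
    apply: (@continuousM R (subspace `[0, x]) (fun t => expR (2 * a * t)) (fun t => p t ^+ 2 + q t ^+ 2)).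
      exact: (@continuous_subspaceT _ _ `[0, x] _ ce t).
    apply: (@continuousD R R^o (subspace `[0, x]) (fun t => p t ^+ 2) (fun t => q t ^+ 2)).
    - apply: (@continuousM R (subspace `[0, x]) p p).
      exact: (@continuous_subspaceW _ _ _ _ _ sub cp t).
      exact: (@continuous_subspaceW _ _ _ _ _ sub cp t).
    - apply: (@continuousM R (subspace `[0, x]) q q).
      exact: (@continuous_subspaceW _ _ _ _ _ sub cq t).
      exact: (@continuous_subspaceW _ _ _ _ _ sub cq t).
  have [c _] := MVT x0 dE cE.
  by rewrite mul0r => /eqP; rewrite subr_eq0 => /eqP.
move: Ex; rewrite /E mulr0 expR0 mul1r p0 q0 expr0n /= addr0 => /eqP.
rewrite mulf_eq0 gt_eqF ?expR_gt0 //= paddr_eq0 ?sqr_ge0 // !sqrf_eq0.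
by case/andP=> /eqP -> /eqP ->.
Qed.


Lemma is_derive_cosk (k t : R) :
  is_derive t 1 (fun t => cos (k * t)) (- sin (k * t) * k).
Proof.
have h : is_derive t 1 (( *%R k) : R -> R) k by apply: is_derive_eq; exact: mulr1.
exact: (@is_derive1_comp _ cos ( *%R k) t _ _ _ h).
Qed.

Lemma is_derive_sink (k t : R) :
  is_derive t 1 (fun t => sin (k * t)) (cos (k * t) * k).
Proof.
have h : is_derive t 1 (( *%R k) : R -> R) k by apply: is_derive_eq; exact: mulr1.
exact: (@is_derive1_comp _ sin ( *%R k) t _ _ _ h).
Qed.

Lemma ftc_glob (F f : R -> R) (x : R) : 0 <= x ->
  (forall t : R, is_derive t (1 : R) F (f t)) -> continuous f ->
  \int[mu]_(t in `[0, x]) f t = F x - F 0.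
Proof.
rewrite le_eqVlt => /predU1P[<-|x0] dF cf.
  by rewrite set_itv1 Rintegral_set1 subrr.
have cF : continuous F.
  by move=> t; apply: differentiable_continuous; apply/derivable1_diffP; case: (dF t).
have := @continuous_FTC2 R f F 0 x x0 (continuous_subspaceT cf).
have h1 : derivable_oo_LRcontinuous F 0 x.
  split.
  - by move=> t _; case: (dF t).
  - exact: cvg_at_right_filter (cF 0).
  - exact: cvg_at_left_filter (cF x).
have h2 : {in `]0, x[, F^`()%classic =1 f}.
  by move=> t _; rewrite derive1E; case: (dF t).
by move=> /(_ h1 h2) h; rewrite /Rintegral h -EFinB.
Qed.

Lemma integ_deriv (L t : R) (f : R -> R) : 0 < t < L ->
  {within `[0, L], continuous f} ->
  is_derive t 1 (fun s => \int[mu]_(x in `[0, s]) f x) (f t).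
Proof.
move=> /andP[t0 tL] cf.
have i := int_within cf.
have ct : {for t, continuous f}.
  apply: (within_continuous_continuous _ cf); first exact: lt_trans tL.
  by rewrite in_itv /= t0 tL.
pose F s := \int[mu]_(x in `[0, s]) f x.
have [d1 d2] : derivable F t 1 /\ F^`()%classic t = f t.
  apply: (@continuous_FTC1 R f (BLeft 0) t L tL i) => //.
apply: DeriveDef; first exact: d1.
by rewrite -derive1E.
Qed.


Lemma within_lin (A : set R) (P Q : R -> R) (c a b : R) :
  {within A, continuous P} -> {within A, continuous Q} ->
  {within A, continuous (fun x => c - (a * P x - b * Q x))}.
Proof.
move=> cP cQ x; apply: cvgB; first exact: cvg_cst.
by apply: cvgB; apply: cvgM; (exact: cvg_cst || exact: cP || exact: cQ).
Qed.

Lemma mu_itv (t : R) : 0 <= t -> fine (mu `[0, t]) = t.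
Proof.
rewrite le_eqVlt => /predU1P[<-|t0].
  by rewrite set_itv1 lebesgue_measure_set1.
by rewrite lebesgue_measure_itv /= lte_fin t0 /= subr0.
Qed.

Lemma inteq (L : R) (P Q W1 W2 : R -> R) (a b c1 c2 : R) :
  measurable_fun `[0, L] W1 ->
  (forall t, 0 <= t <= L -> P t = \int[mu]_(x in `[0, t]) W1 x) ->
  {ae mu, forall x, 0 <= x <= L -> W1 x = c1 - (a * P x - b * Q x)} ->
  {within `[0, L], continuous P} -> {within `[0, L], continuous Q} ->
  forall t, 0 <= t <= L ->
    P t = c1 * t - (a * \int[mu]_(x in `[0, t]) P x - b * \int[mu]_(x in `[0, t]) Q x).
Proof.
move=> mW PE hae cP cQ t /andP[t0 tL].
have sub : `[0, t] `<=` `[0, L] by apply: subset_itvl; rewrite bnd_simp.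
have cPt := continuous_subspaceW sub cP.
have cQt := continuous_subspaceW sub cQ.
rewrite PE ?t0 ?tL //.
have -> : \int[mu]_(x in `[0, t]) W1 x =
          \int[mu]_(x in `[0, t]) (c1 - (a * P x - b * Q x)).
  rewrite /Rintegral; congr fine; apply: ae_eq_integral => //.
  - apply/measurable_EFinP; exact: measurable_funS mW.
  - apply/measurable_EFinP; apply: subspace_continuous_measurable_fun => //.
    exact: within_lin.
  - move: hae; apply: (@filterS _ _ (ae_filter_ringOfSetsType mu)).
    move=> x hx /= xI.
    rewrite hx //.
    by move: xI; rewrite /= in_itv /= => /andP[-> /le_trans]; apply.
have iP := int_within cPt; have iQ := int_within cQt.
rewrite RintegralB //; last first.
  exact: (iabB (iabZ a iP) (iabZ b iQ)).
  exact: int_cont (@cst_continuous _ _ c1).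
rewrite Rintegral_cst // mu_itv // RintegralB ?RintegralZl //.
  exact: iabZ.
exact: iabZ.
Qed.


Definition E1 (a b t : R) := expR (- a * t) * cos (b * t).
Definition E2 (a b t : R) := - (expR (- a * t) * sin (b * t)).

Lemma dE1 a b t : is_derive t (1:R) (E1 a b) (- a * E1 a b t + b * E2 a b t).
Proof.
have h := is_deriveM (is_derive_expk (- a) t) (is_derive_cosk b t).
apply: is_derive_eq h _.
rewrite /E1 /E2 /GRing.scale /=; ring.
Qed.

Lemma dE2 a b t : is_derive t (1:R) (E2 a b) (- a * E2 a b t - b * E1 a b t).
Proof.
have h := is_deriveN (is_deriveM (is_derive_expk (- a) t) (is_derive_sink b t)).
apply: is_derive_eq h _.
rewrite /E1 /E2 /GRing.scale /=; ring.
Qed.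

Definition phi1 (a b d1 d2 t : R) := d1 - d1 * E1 a b t + d2 * E2 a b t.
Definition phi2 (a b d1 d2 t : R) := d2 - d1 * E2 a b t - d2 * E1 a b t.

Lemma dphi1 a b d1 d2 t : is_derive t (1:R) (phi1 a b d1 d2)
  ((d1 * a - d2 * b) - (a * phi1 a b d1 d2 t - b * phi2 a b d1 d2 t)).
Proof.
have h := is_deriveD (is_deriveB (is_derive_cst d1 t 1) (is_deriveZ d1 (dE1 a b t)))
   (is_deriveZ d2 (dE2 a b t)).
apply: is_derive_eq h _.
rewrite /phi1 /phi2 /GRing.scale /=; ring.
Qed.

Lemma dphi2 a b d1 d2 t : is_derive t (1:R) (phi2 a b d1 d2)
  ((d1 * b + d2 * a) - (a * phi2 a b d1 d2 t + b * phi1 a b d1 d2 t)).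
Proof.
have h := is_deriveB (is_deriveB (is_derive_cst d2 t 1) (is_deriveZ d1 (dE2 a b t)))
   (is_deriveZ d2 (dE1 a b t)).
apply: is_derive_eq h _.
rewrite /phi1 /phi2 /GRing.scale /=; ring.
Qed.

Lemma cont_of_deriv (f : R -> R) (df : R -> R) :
  (forall t, is_derive t (1:R) f (df t)) -> continuous f.
Proof.
by move=> h t; apply: differentiable_continuous; apply/derivable1_diffP; case: (h t).
Qed.


Lemma deriv_PP (L t : R) (P Q : R -> R) (a b c1 : R) : 0 < t < L ->
  {within `[0, L], continuous P} -> {within `[0, L], continuous Q} ->
  (forall s, 0 <= s <= L -> P s = c1 * s - (a * \int[mu]_(x in `[0, s]) P x - b * \int[mu]_(x in `[0, s]) Q x)) ->
  is_derive t (1:R) P (c1 - (a * P t - b * Q t)).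
Proof.
move=> tI cP cQ hP.
have dFP := integ_deriv tI cP.
have dFQ := integ_deriv tI cQ.
have h := is_deriveB (is_deriveZ c1 (is_derive_id t (1:R))) (is_deriveB (is_deriveZ a dFP) (is_deriveZ b dFQ)).
have h' := is_derive_eq h (_ : _ = c1 - (a * P t - b * Q t)).
apply: (near_eq_is_derive _ (h' _)); last by rewrite /GRing.scale /= mulr1.
have tI' : t \in `]0, L[ by rewrite in_itv /=.
move: (near_in_itvoo tI'); apply: filterS => s; rewrite in_itv /= => /andP[s0 sL].
by rewrite hP ?(ltW s0) ?(ltW sL).
Qed.

Lemma step_ode (L : R) (P Q : R -> R) (a b c1 c2 d1 d2 : R) :
  0 < L -> {within `[0, L], continuous P} -> {within `[0, L], continuous Q} ->
  c1 = d1 * a - d2 * b -> c2 = d1 * b + d2 * a ->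
  (forall t, 0 <= t <= L -> P t = c1 * t - (a * \int[mu]_(x in `[0, t]) P x - b * \int[mu]_(x in `[0, t]) Q x)) ->
  (forall t, 0 <= t <= L -> Q t = c2 * t - (a * \int[mu]_(x in `[0, t]) Q x + b * \int[mu]_(x in `[0, t]) P x)) ->
  forall t, 0 <= t <= L -> P t = phi1 a b d1 d2 t /\ Q t = phi2 a b d1 d2 t.
Proof.
move=> L0 cP cQ e1 e2 hP hQ.
have hQ' : forall s, 0 <= s <= L -> Q s = c2 * s - (a * \int[mu]_(x in `[0, s]) Q x - (- b) * \int[mu]_(x in `[0, s]) P x).
  by move=> s sI; rewrite hQ // mulNr opprK.
pose p t := P t - phi1 a b d1 d2 t.
pose q t := Q t - phi2 a b d1 d2 t.
have cp : {within `[0, L], continuous p}.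
  apply: (within_continuousB cP); apply: continuous_subspaceT.
  exact: cont_of_deriv (dphi1 a b d1 d2).
have cq : {within `[0, L], continuous q}.
  apply: (within_continuousB cQ); apply: continuous_subspaceT.
  exact: cont_of_deriv (dphi2 a b d1 d2).
have dp : forall x, 0 < x < L -> is_derive x (1:R) p (-(a * p x - b * q x)).
  move=> x xI; have h := is_deriveB (deriv_PP xI cP cQ hP) (dphi1 a b d1 d2 x).
  by apply: is_derive_eq h _; rewrite /p /q e1; ring.
have dq : forall x, 0 < x < L -> is_derive x (1:R) q (-(a * q x + b * p x)).
  move=> x xI; have h := is_deriveB (deriv_PP xI cQ cP hQ') (dphi2 a b d1 d2 x).
  by apply: is_derive_eq h _; rewrite /p /q e2; ring.
have F0 : forall f : R -> R, \int[mu]_(x in `[0, 0]) f x = 0.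
  by move=> f; rewrite set_itv1 Rintegral_set1.
have ph0 : phi1 a b d1 d2 0 = 0 /\ phi2 a b d1 d2 0 = 0.
  by rewrite /phi1 /phi2 /E1 /E2 !mulr0 expR0 cos0 sin0; split; ring.
have p0 : p 0 = 0 by rewrite /p hP ?lexx ?(ltW L0) // !F0 ph0.1; ring.
have q0 : q 0 = 0 by rewrite /q hQ ?lexx ?(ltW L0) // !F0 ph0.2; ring.
move=> t tI; have [] := ode_uniq L0 cp cq dp dq p0 q0 tI.
by rewrite /p /q => /eqP; rewrite subr_eq0 => /eqP -> /eqP; rewrite subr_eq0 => /eqP ->.
Qed.


Lemma iabM_bd (a b : R) (f h : R -> R) : iab a b f -> continuous h ->
  (forall x, `|h x| <= 1) -> iab a b (fun x => f x * h x).
Proof.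
move=> hf ch h1; rewrite /iab.
have -> : EFin \o (fun x => f x * h x) = ((EFin \o f) \* (EFin \o h))%E.
  by apply/funext => x /=; rewrite EFinM.
apply: integrableMl => //.
- apply: measurable_funS (continuous_measurable_fun ch) => //.
- exists 1; split => // M M1 y _; exact: le_trans (h1 y) (ltW M1).
Qed.

Definition thk (L : R) (k : int) (y : R) := - (2 * k%:~R * pi * y / L).
Definition bet (L : R) (k : int) := 2 * k%:~R * pi / L.

Lemma expiE (L : R) (k : int) y :
  expi (thk L k y) = Complex (cos (bet L k * y)) (- sin (bet L k * y)).
Proof. by rewrite /expi /thk /bet cosN sinN mulrAC. Qed.

Lemma ReF_conj (g : R -> R[i]) : ReF (fun y => (g y)^*%C) = ReF g.
Proof. by apply/funext => y; rewrite /ReF; case: (g y). Qed.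
Lemma ImF_conj (g : R -> R[i]) : ImF (fun y => (g y)^*%C) = (fun y => - ImF g y).
Proof. by apply/funext => y; rewrite /ImF; case: (g y). Qed.

Lemma ReF_sub (f h : R -> R[i]) : ReF (fun y => f y - h y) = (fun y => ReF f y - ReF h y).
Proof. by apply/funext => y; rewrite /ReF; case: (f y); case: (h y). Qed.
Lemma ImF_sub (f h : R -> R[i]) : ImF (fun y => f y - h y) = (fun y => ImF f y - ImF h y).
Proof. by apply/funext => y; rewrite /ImF; case: (f y); case: (h y). Qed.

Lemma int_conj (L : R) (g : R -> R[i]) : L2 L g ->
  iab 0 L (ReF (fun y => (g y)^*%C)) /\ iab 0 L (ImF (fun y => (g y)^*%C)).
Proof.
move=> /L2_int [h1 h2]; rewrite ReF_conj ImF_conj; split => //.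
exact: iabN.
Qed.

Lemma ccos L k : continuous (fun y : R => cos (bet L k * y)).
Proof. exact: cont_of_deriv (fun t => is_derive_cosk (bet L k) t). Qed.
Lemma csin L k : continuous (fun y : R => sin (bet L k * y)).
Proof. exact: cont_of_deriv (fun t => is_derive_sink (bet L k) t). Qed.

Lemma int_conj_e (L : R) (g : R -> R[i]) (k : int) : L2 L g ->
  iab 0 L (ReF (fun y => (g y)^*%C * expi (thk L k y))) /\
  iab 0 L (ImF (fun y => (g y)^*%C * expi (thk L k y))).
Proof.
move=> /L2_int [h1 h2].
have eR : ReF (fun y => (g y)^*%C * expi (thk L k y)) =
   (fun y => ReF g y * cos (bet L k * y) - ImF g y * sin (bet L k * y)).
  apply/funext => y; rewrite /ReF /ImF expiE; case: (g y) => u v /=; ring.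
have eI : ImF (fun y => (g y)^*%C * expi (thk L k y)) =
   (fun y => - (ReF g y * sin (bet L k * y)) - ImF g y * cos (bet L k * y)).
  apply/funext => y; rewrite /ReF /ImF expiE; case: (g y) => u v /=; ring.
rewrite eR eI; split.
- apply: iabB; apply: iabM_bd => //; (exact: ccos || exact: csin || (move=> y; exact: cos_max) || (move=> y; exact: sin_max)).
- apply: iabB; first apply: iabN; apply: iabM_bd => //; (exact: ccos || exact: csin || (move=> y; exact: cos_max) || (move=> y; exact: sin_max)).
Qed.

Lemma cint_split (L : R) (g : R -> R[i]) (k : int) : L2 L g ->
  cint 0 L (fun y => (g y)^*%C * (1 - expi (thk L k y))) =
  lam0 L g - cint 0 L (fun y => (g y)^*%C * expi (thk L k y)).
Proof.
move=> Lg; have [i1 i2] := int_conj Lg; have [i3 i4] := int_conj_e k Lg.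
rewrite (@cint_ext 0 L _ (fun y => (g y)^*%C - (g y)^*%C * expi (thk L k y))).
  by rewrite cintB.
by move=> y _; rewrite mulrBr mulr1.
Qed.


Lemma backward (L : R) (g : R -> R[i]) : 0 < L -> L2 L g ->
  (forall k : int, k != 0 -> lam0 L g != lamk L k) ->
  (forall k : int, k != 0 ->
      1 + (lamk L k - lam0 L g)^-1 *
            cint 0 L (fun x => (g x)^*%C * expi (- (2 * k%:~R * pi * x / L)))
      != 0) ->
  forall (lam : R[i]) (z : R -> R[i]),
       in_ker_lam_Astar L g lam z -> Bstar z L = 0 ->
       forall x, 0 <= x <= L -> z x = 0.
Proof.
move=> L0 Lg hne hc lam z [[_ zLz0] [w [[Lw zw] hae]]] zL x xI.
rewrite /Bstar in zL.
have z0 : z 0 = 0 by rewrite -zLz0.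
move: hae; set c := cint 0 L (fun y => (g y)^*%C * z y) => hae.
have [iw1 iw2] := L2_int Lw.
have [mw1 mw2 _] := Lw.
pose P t := \int[mu]_(y in `[0, t]) ReF w y.
pose Q t := \int[mu]_(y in `[0, t]) ImF w y.
have zPQ : forall t, 0 <= t <= L -> ReF z t = P t /\ ImF z t = Q t.
  by move=> t tI; rewrite /ReF /ImF (zw t tI) z0 add0r.
have cP : {within `[0, L], continuous P} := parameterized_integral_continuous (ltW L0) iw1.
have cQ : {within `[0, L], continuous Q} := parameterized_integral_continuous (ltW L0) iw2.
case: lam hae => a b hae.
pose c1 := complex.Re c; pose c2 := complex.Im c.
have hae12 : {ae mu, forall y, 0 <= y <= L ->
   ReF w y = c1 - (a * P y - b * Q y) /\ ImF w y = c2 - (a * Q y - (- b) * P y)}.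
  move: hae; apply: (@filterS _ _ (ae_filter_ringOfSetsType mu)) => y hy yI.
  have [h1 h2] := zPQ y yI; move: (hy yI) h1 h2; rewrite /ReF /ImF /c1 /c2.
  case: (z y) => z1 z2; case: (w y) => w1 w2; case: (c) => e1 e2 /= h <- <-.
  have := congr1 (@complex.Re _) h; have := congr1 (@complex.Im _) h => /= hi hr.
  split; lra.
have hae1 : {ae mu, forall y, 0 <= y <= L -> ReF w y = c1 - (a * P y - b * Q y)}.
  by move: hae12; apply: (@filterS _ _ (ae_filter_ringOfSetsType mu)) => y hy /hy [].
have hae2 : {ae mu, forall y, 0 <= y <= L -> ImF w y = c2 - (a * Q y - (- b) * P y)}.
  by move: hae12; apply: (@filterS _ _ (ae_filter_ringOfSetsType mu)) => y hy /hy [].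
have hP : forall t, 0 <= t <= L -> P t = c1 * t - (a * \int[mu]_(y in `[0, t]) P y - b * \int[mu]_(y in `[0, t]) Q y).
  by move=> t tI; have := inteq (ReF w) 0 mw1 (fun t _ => erefl) hae1 cP cQ tI.
have eqQ := inteq (ReF w) 0 mw2 (fun t _ => erefl) hae2 cQ cP.
have hQ : forall t, 0 <= t <= L -> Q t = c2 * t - (a * \int[mu]_(y in `[0, t]) Q y + b * \int[mu]_(y in `[0, t]) P y).
  by move=> t tI; have := eqQ t tI; rewrite mulNr opprK.
have L0' : L != 0 by rewrite gt_eqF.
have LI : 0 <= L <= L by rewrite lexx ltW.
have [lam0|lamn0] := eqVneq (Complex a b) 0.
  have a0 : a = 0 by have := congr1 (@complex.Re _) lam0.
  have b0 : b = 0 by have := congr1 (@complex.Im _) lam0.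
  have PL : forall t, 0 <= t <= L -> P t = c1 * t.
    by move=> t tI; rewrite hP // a0 b0 !mul0r subrr subr0.
  have QL : forall t, 0 <= t <= L -> Q t = c2 * t.
    by move=> t tI; rewrite hQ // a0 b0 !mul0r addr0 subr0.
  have [h1 h2] := zPQ L LI.
  have c10 : c1 = 0.
    move: h1; rewrite PL // /ReF zL /= => /esym/eqP; rewrite mulf_eq0 (negbTE L0') orbF.
    by move/eqP.
  have c20 : c2 = 0.
    move: h2; rewrite QL // /ImF zL /= => /esym/eqP; rewrite mulf_eq0 (negbTE L0') orbF.
    by move/eqP.
  have [h3 h4] := zPQ x xI.
  apply: cplx_eq.
    by move: h3; rewrite /ReF => ->; rewrite PL // c10 mul0r.
  by move: h4; rewrite /ImF => ->; rewrite QL // c20 mul0r.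
have [d cE] : exists d, c = d * Complex a b by exists (c / Complex a b); rewrite divfK.
have e1 : c1 = complex.Re d * a - complex.Im d * b by rewrite /c1 cE; case: (d) => u v.
have e2 : c2 = complex.Re d * b + complex.Im d * a by rewrite /c2 cE; case: (d) => u v /=; ring.
have hPQ := step_ode L0 cP cQ e1 e2 hP hQ.
pose ee t := Complex (E1 a b t) (E2 a b t).
have zE : forall t, 0 <= t <= L -> z t = d * (1 - ee t).
  move=> t tI; have [h1 h2] := zPQ t tI; have [h3 h4] := hPQ t tI.
  move: h1 h2; rewrite /ReF /ImF h3 h4 /phi1 /phi2 /ee.
  case: (z t) => u v /= -> ->; case: (d) => p q; apply: cplx_eq => /=; ring.
have [d0|dn0] := eqVneq d 0; first by rewrite zE // d0 mul0r.
have := zE L LI; rewrite zL => /esym/eqP; rewrite mulf_eq0 (negbTE dn0) /= => /eqP eL.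
have hE1 : expR (- a * L) * cos (b * L) = 1.
  have := congr1 (@complex.Re _) eL; rewrite /ee /E1 /= => /eqP.
  by rewrite subr_eq0 => /eqP <-.
have hE2 : sin (b * L) = 0.
  have := congr1 (@complex.Im _) eL; rewrite /ee /E2 /= sub0r opprK => /eqP.
  by rewrite mulf_eq0 expR_eq0 /= => /eqP.
have cb2 : cos (b * L) ^+ 2 = 1 by have := cos2Dsin2 (b * L); rewrite hE2 expr0n /= addr0.
have cbpos : 0 < cos (b * L).
  by rewrite -(pmulr_rgt0 _ (expR_gt0 (- a * L))) hE1 ltr01.
have cb1 : cos (b * L) = 1.
  have h : (cos (b * L) - 1) * (cos (b * L) + 1) = cos (b * L) ^+ 2 - 1 by ring.
  move: h; rewrite cb2 subrr => /eqP; rewrite mulf_eq0 => /orP[/eqP|/eqP h].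
    by move/eqP; rewrite subr_eq0 => /eqP.
  by move: cbpos h; set u := cos _ => u0 hu; lra.
have a0 : a = 0.
  have : expR (- a * L) = expR 0 by rewrite expR0 -hE1 cb1 mulr1.
  move/expR_inj/eqP; rewrite mulf_eq0 (negbTE L0') orbF oppr_eq0.
  by move/eqP.
have [n hn] := cos_eq1 cb1.
have nz : n != 0.
  apply/negP => /eqP n0; move: lamn0; rewrite a0.
  have -> : b = 0.
    by move: hn; rewrite n0 mulr0 mul0r => /eqP; rewrite mulf_eq0 (negbTE L0') orbF => /eqP.
  by rewrite eqxx.
have bE : b = bet L n by rewrite /bet -hn mulfK.
have lamE : Complex a b = lamk L n by rewrite /lamk a0 bE.
have eeE : forall t, ee t = expi (thk L n t).
  by move=> t; rewrite expiE /ee /E1 /E2 a0 bE oppr0 mul0r expR0 !mul1r.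
have [i1 i2] := int_conj Lg; have [i3 i4] := int_conj_e n Lg.
have cI : c = d * (lam0 L g - cint 0 L (fun y => (g y)^*%C * expi (thk L n y))).
  rewrite /c (@cint_ext 0 L _ (fun y => d * ((g y)^*%C - (g y)^*%C * expi (thk L n y)))).
    rewrite cintZ; first by rewrite cintB.
      by rewrite ReF_sub; apply: iabB.
    by rewrite ImF_sub; apply: iabB.
  by move=> y yI; rewrite zE // eeE; ring.
set I := cint 0 L (fun y => (g y)^*%C * expi (thk L n y)) in cI.
have lamI : Complex a b = lam0 L g - I by apply: (mulfI dn0); rewrite -cE -cI.
have hcn : 1 + (lamk L n - lam0 L g)^-1 * I != 0 := hc n nz.
have In0 : I != 0.
  apply/negP => /eqP I0; move: (hne n nz); rewrite -lamE lamI I0 subr0 eqxx.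
  by [].
move: hcn; rewrite -lamE lamI addrAC subrr add0r invrN mulNr mulVf // subrr.
by rewrite eqxx.
Qed.


Lemma forward (L : R) (g : R -> R[i]) : 0 < L -> L2 L g ->
  (forall (lam : R[i]) (z : R -> R[i]),
       in_ker_lam_Astar L g lam z -> Bstar z L = 0 ->
       forall x, 0 <= x <= L -> z x = 0) ->
  forall k : int, k != 0 ->
      1 + (lamk L k - lam0 L g)^-1 *
            cint 0 L (fun x => (g x)^*%C * expi (- (2 * k%:~R * pi * x / L)))
      != 0.
Proof.
move=> L0 Lg K k kn0; apply/negP => /eqP hc.
have L0' : L != 0 by rewrite gt_eqF.
have hc' : 1 + (lamk L k - lam0 L g)^-1 * cint 0 L (fun y => (g y)^*%C * expi (thk L k y)) = 0 := hc.
set I := cint 0 L (fun y => (g y)^*%C * expi (thk L k y)) in hc'.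
set lam := lamk L k in hc'; set l0 := lam0 L g in hc'.
have ln0 : lam - l0 != 0.
  apply/negP => /eqP h; move: hc'; rewrite h invr0 mul0r addr0 => /eqP.
  by rewrite oner_eq0.
have II : I = l0 - lam.
  move/eqP: hc'; rewrite addrC addr_eq0 => /eqP h.
  have := congr1 (fun u => (lam - l0) * u) h; rewrite /= mulrA mulfV // mul1r => ->.
  by rewrite mulrN1 opprB.
pose bb := bet L k.
pose z := fun y => 1 - expi (thk L k y).
pose w := fun y => lam * expi (thk L k y).
have ReFw : ReF w = fun y => bb * sin (bb * y).
  by apply/funext => y; rewrite /ReF /w expiE /lam /lamk /=; rewrite -/(bet L k) -/bb; ring.
have ImFw : ImF w = fun y => bb * cos (bb * y).
  by apply/funext => y; rewrite /ImF /w expiE /lam /lamk /=; rewrite -/(bet L k) -/bb; ring.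
have zE : forall y, z y = Complex (1 - cos (bb * y)) (sin (bb * y)).
  by move=> y; rewrite /z expiE; apply: cplx_eq => /=; rewrite ?subr0 ?sub0r ?opprK.
have z0 : z 0 = 0 by rewrite zE mulr0 cos0 sin0 subrr.
have zL : z L = 0.
  rewrite zE; have -> : bb * L = 0 + 2 * k%:~R * pi by rewrite /bb /bet add0r mulfVK.
  by rewrite cos_per sin_per cos0 sin0 subrr.
have Lw : L2 L w.
  split.
  - rewrite ReFw; apply: measurable_funS (continuous_measurable_fun _) => //.
    apply: cont_of_deriv => t; apply: is_deriveZ; exact: is_derive_sink.
  - rewrite ImFw; apply: measurable_funS (continuous_measurable_fun _) => //.
    apply: cont_of_deriv => t; apply: is_deriveZ; exact: is_derive_cosk.
  - have -> : (fun x => ((ReF w x) ^+ 2 + (ImF w x) ^+ 2)%:E) = EFin \o cst (bb ^+ 2).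
      apply/funext => y; rewrite ReFw ImFw /=; congr EFin.
      by rewrite !exprMn -mulrDr addrC cos2Dsin2 mulr1.
    by apply: int_cont => t; exact: cvg_cst.
have hd : H1_deriv L z w.
  split => // x /andP[x0 xL]; rewrite z0 add0r zE /cint ReFw ImFw.
  have h1 : \int[mu]_(t in `[0, x]) (bb * sin (bb * t)) = - cos (bb * x) - - cos (bb * 0).
    apply: (ftc_glob (F := fun t => - cos (bb * t))) => //.
    - move=> t; apply: is_derive_eq (is_deriveN (is_derive_cosk bb t)) _; ring.
    - exact: cont_of_deriv (fun t => is_deriveZ bb (is_derive_sink bb t)).
  have h2 : \int[mu]_(t in `[0, x]) (bb * cos (bb * t)) = sin (bb * x) - sin (bb * 0).
    apply: (ftc_glob (F := fun t => sin (bb * t))) => //.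
    - move=> t; apply: is_derive_eq (is_derive_sink bb t) _; ring.
    - exact: cont_of_deriv (fun t => is_deriveZ bb (is_derive_cosk bb t)).
  rewrite h1 h2.
  by rewrite mulr0 cos0 sin0 subr0; congr Complex; ring.
have hker : in_ker_lam_Astar L g lam z.
  split; first by split; [exists w | rewrite zL z0].
  exists w; split => //; apply: aeW => y _.
  rewrite /z cint_split // -/l0 -/I II /w; ring.
have x0I : 0 <= L / (2 * `|k%:~R : R|) <= L.
  have k1 : 1 <= `|k%:~R : R| by rewrite -intr_norm ler1z -gtz0_ge1 normr_gt0.
  apply/andP; split; first by apply: divr_ge0; [exact: ltW | rewrite mulr_ge0 ?normr_ge0].
  rewrite ler_pdivrMr; last by rewrite mulr_gt0 // (lt_le_trans ltr01 k1).
  rewrite ler_peMr ?ltW //; move: k1; set s := `|_| => k1; lra.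
have := K lam z hker zL _ x0I; rewrite zE => /(congr1 (@complex.Re _)) /= /eqP.
rewrite subr_eq0 eq_sym.
have kn0' : k%:~R != 0 :> R by rewrite intr_eq0.
have -> : bb * (L / (2 * `|k%:~R : R|)) = k%:~R / `|k%:~R : R| * pi.
  by rewrite /bb /bet; field; rewrite ?normr_eq0 ?kn0' ?L0' ?pnatr_eq0.
have [kp|kn] := ltrP 0 (k%:~R : R).
  by rewrite gtr0_norm // divff // mul1r cospi => /eqP; lra.
rewrite ler0_norm // invrN mulrN divff // mulN1r cosN cospi.
by move/eqP; lra.
Qed.
End S.

Unset Implicit Arguments.

Theorem proposition9 (R : realType) (L : R) (g : R -> R[i]) :
  0 < L -> L2 L g ->
  (forall k : int, k != 0 -> lam0 L g != lamk L k) ->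
  ((forall (lam : R[i]) (z : R -> R[i]),
       in_ker_lam_Astar L g lam z -> Bstar z L = 0 ->
       forall x, 0 <= x <= L -> z x = 0)
   <->
   (forall k : int, k != 0 ->
      1 + (lamk L k - lam0 L g)^-1 *
            cint 0 L (fun x => (g x)^*%C * expi (- (2 * k%:~R * pi * x / L)))
      != 0)).
Proof.
move=> L0 Lg hne; split.
  exact: forward.
exact: backward.
Qed.
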